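(* Let $A>1$ and let $\mathcal{D}_A=\{(\mathbf f,\mathbf g,\mathbf F,\mathbf G,\mathbf u,\mathbf v)\in\mathbb{R}^6:\ \mathbf u,\mathbf v>0,\ 1\le\mathbf u\mathbf v\le A,\ \mathbf f^2\le\mathbf F\mathbf v,\ \mathbf g^2\le\mathbf G\mathbf u\}$. If $X,X_+,X_-\in\mathcal{D}_A$ and $X=(X_++X_-)/2$, then for every $\theta\in(0,1)$ the point $\theta X_++(1-\theta)X_-$ belongs to $\mathcal{D}_{A'}$, where $A'=9A/8$. *)

(* Defs.v *)
From Stdlib Require Import Reals.
Open Scope R_scope.

Record pt6 := mk6 { pf : R; pg : R; pF : R; pG : R; pu : R; pv : R }.

Definition inD (A : R) (X : pt6) : Prop :=
  0 < pu X /\ 0 < pv X /\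
  1 <= pu X * pv X <= A /\
  pf X ^ 2 <= pF X * pv X /\
  pg X ^ 2 <= pG X * pu X.

Definition comb (a : R) (X : pt6) (b : R) (Y : pt6) : pt6 :=
  mk6 (a * pf X + b * pf Y) (a * pg X + b * pg Y) (a * pF X + b * pF Y)
      (a * pG X + b * pG Y) (a * pu X + b * pu Y) (a * pv X + b * pv Y).

(* Main.v *)
Require Import Defs.
From Stdlib Require Import Reals Lra Psatz.
Open Scope R_scope.

Lemma cs_step (t fp fm Fp Fm vp vm : R) :
  0 < t < 1 -> 0 < vp -> 0 < vm ->
  fp ^ 2 <= Fp * vp -> fm ^ 2 <= Fm * vm ->
  (t * fp + (1 - t) * fm) ^ 2 <= (t * Fp + (1 - t) * Fm) * (t * vp + (1 - t) * vm).
Proof.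
  intros Ht Hp Hm H1 H2.
  (* RHS - LHS >= t(1-t) (fp vm - fm vp)^2/(vp vm) >= 0 *)
  assert (Hk : 0 <= t * (1 - t)) by nra.
  assert (E : (t * Fp + (1 - t) * Fm) * (t * vp + (1 - t) * vm) * (vp * vm)
     - (t * fp + (1 - t) * fm) ^ 2 * (vp * vm)
     = t * t * vm * vp * (Fp * vp - fp ^ 2)
       + (1-t)*(1-t) * vp * vm * (Fm * vm - fm ^ 2)
       + t * (1 - t) * (vm * vm * (Fp * vp - fp^2) + vp * vp * (Fm * vm - fm^2))
       + t * (1 - t) * (fp * vm - fm * vp) ^ 2).
  { ring. }
  assert (0 <= (t * Fp + (1 - t) * Fm) * (t * vp + (1 - t) * vm) * (vp * vm)
     - (t * fp + (1 - t) * fm) ^ 2 * (vp * vm)).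
  { rewrite E.
    assert (a1 : 0 <= Fp * vp - fp ^ 2) by lra.
    assert (a2 : 0 <= Fm * vm - fm ^ 2) by lra.
    assert (b1 : 0 <= t * t * vm * vp) by (repeat apply Rmult_le_pos; lra).
    assert (b2 : 0 <= (1-t)*(1-t) * vp * vm) by (repeat apply Rmult_le_pos; lra).
    assert (b3 : 0 <= vm * vm) by (apply Rmult_le_pos; lra).
    assert (b4 : 0 <= vp * vp) by (apply Rmult_le_pos; lra).
    assert (b5 : 0 <= (fp * vm - fm * vp) ^ 2) by (apply pow2_ge_0).
    pose proof (Rmult_le_pos _ _ b1 a1).
    pose proof (Rmult_le_pos _ _ b2 a2).
    pose proof (Rmult_le_pos _ _ b3 a1).
    pose proof (Rmult_le_pos _ _ b4 a2).
    pose proof (Rmult_le_pos _ _ Hk b5).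
    assert (0 <= t * (1 - t) * (vm * vm * (Fp * vp - fp^2) + vp * vp * (Fm * vm - fm^2))) by (apply Rmult_le_pos; lra).
    lra. }
  assert (0 < vp * vm) by nra.
  nra.
Qed.

Theorem lemma5p1 (A : R) (X Xp Xm : pt6) :
  1 < A ->
  inD A X -> inD A Xp -> inD A Xm ->
  X = comb (1/2) Xp (1/2) Xm ->
  forall theta : R, 0 < theta < 1 ->
  inD (9 * A / 8) (comb theta Xp (1 - theta) Xm).
Proof.
  intros HA HX Hp Hm EX t Ht.
  subst X.
  destruct Xp as [fp gp Fp Gp up vp]; destruct Xm as [fm gm Fm Gm um vm].
  unfold inD, comb in *; simpl in *.
  destruct HX as [_ [_ [[_ HX] _]]].
  destruct Hp as [Hup [Hvp [[Hp1 Hp2] [Hfp Hgp]]]].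
  destruct Hm as [Hum [Hvm [[Hm1 Hm2] [Hfm Hgm]]]].
  set (s := up * vm + um * vp).
  assert (Hs4 : up * vp + um * vm + s <= 4 * A) by (unfold s; nra).
  assert (Hs2 : 2 <= s).
  { assert (0 < up * vm) by nra. assert (0 < um * vp) by nra.
    assert (1 <= (up * vm) * (um * vp)) by nra.
    pose proof (pow2_ge_0 (up * vm - um * vp)).
    assert (4 <= (up * vm + um * vp) ^ 2) by lra.
    unfold s. nra. }
  assert (Hk : 0 < t * (1 - t)) by nra.
  assert (Eprod : (t * up + (1 - t) * um) * (t * vp + (1 - t) * vm)
     = t * t * (up * vp) + (1 - t) * (1 - t) * (um * vm) + t * (1 - t) * s)
     by (unfold s; ring).
  clearbody s.
  split; [nra|]. split; [nra|]. split; [split|split].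
  - rewrite Eprod.
    assert (0 <= t * t * (up * vp - 1)) by (apply Rmult_le_pos; nra).
    assert (0 <= (1 - t) * (1 - t) * (um * vm - 1)) by (apply Rmult_le_pos; nra).
    assert (0 <= t * (1 - t) * (s - 2)) by (apply Rmult_le_pos; lra).
    nra.
  - rewrite Eprod.
    assert (t * (1 - t) * s <= t * (1 - t) * (4 * A - up * vp - um * vm)) by (apply Rmult_le_compat_l; lra).
    destruct (Rle_lt_dec (1/2) t).
    + assert (0 <= (A - up * vp) * (t * (2 * t - 1))) by (apply Rmult_le_pos; [lra|apply Rmult_le_pos; lra]).
      assert (0 <= um * vm * ((1 - t) * (2 * t - 1))) by (apply Rmult_le_pos; [lra|apply Rmult_le_pos; lra]).
      assert (0 <= A * (t - 3/4) ^ 2) by (apply Rmult_le_pos; [lra|apply pow2_ge_0]).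
      lra.
    + assert (0 <= (A - um * vm) * ((1 - t) * (1 - 2 * t))) by (apply Rmult_le_pos; [lra|apply Rmult_le_pos; lra]).
      assert (0 <= up * vp * (t * (1 - 2 * t))) by (apply Rmult_le_pos; [lra|apply Rmult_le_pos; lra]).
      assert (0 <= A * (t - 1/4) ^ 2) by (apply Rmult_le_pos; [lra|apply pow2_ge_0]).
      lra.
  - apply cs_step; lra.
  - apply cs_step; lra.
Qed.
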